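(* Let $n\ge3$ and $c>0$. Then $\gamma$ is a $C^2$ function on $[0,\infty)$, and for all $x\ge0$: (i) $2x\gamma''(x)+\gamma'(x)\le\frac{3}{n+2}$, with equality if and only if $x=x_0$; (ii) $(\gamma(x)+nc)\,x\,\gamma'(x)\ge 2cx+\gamma(x)^2-nc\,\gamma(x)$, with equality if and only if $x\ge x_0$; (iii) $\gamma(x)>x\gamma'(x)$; (iv) $\gamma(x)=\min\{\alpha(x),\beta(x)\}$; (v) $\frac{x}{n-1}+2c<\gamma(x)<\frac{x}{n-1}+nc$; (vi) $\frac{n-2}{\sqrt{n(n-1)}}\sqrt{x\left(\gamma(x)-\frac1n x\right)}+\gamma(x)\le\frac2n x+nc$.
   Context: Definition of $\gamma$: For $n\ge 3$, $c>0$ and $x\ge 0$ put $\alpha(x)=nc+\frac{n}{2(n-1)}x-\frac{n-2}{2(n-1)}\sqrt{x^2+4(n-1)cx}$, $y_n=4(1-n)+\frac{2(n^2-4)}{\sqrt{2n-5}}\cos\!\left(\frac13\arctan\frac{n^2-4n+6}{2(n-1)\sqrt{2n-5}}\right)$, $x_0=y_nc$, $\beta(x)=\alpha(x_0)+\alpha'(x_0)(x-x_0)+\frac12\alpha''(x_0)(x-x_0)^2$, and $\gamma(x)=\alpha(x)$ for $x\ge x_0$, $\gamma(x)=\beta(x)$ for $0\le x<x_0$. *)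

(* Defs.v *)
From Stdlib Require Import Reals Lra.
Open Scope R_scope.

Definition alpha (n : nat) (c x : R) : R :=
  INR n * c + INR n / (2 * (INR n - 1)) * x
  - (INR n - 2) / (2 * (INR n - 1)) * sqrt (x ^ 2 + 4 * (INR n - 1) * c * x).

(* Closed forms of alpha' and alpha'' (valid for x > 0):
   with s(x) = sqrt(x^2+4(n-1)cx), s' = (x+2(n-1)c)/s, s'' = -4(n-1)^2c^2/s^3. *)
Definition alpha1 (n : nat) (c x : R) : R :=
  INR n / (2 * (INR n - 1))
  - (INR n - 2) / (2 * (INR n - 1)) * ((x + 2 * (INR n - 1) * c)
                                       / sqrt (x ^ 2 + 4 * (INR n - 1) * c * x)).

Definition alpha2 (n : nat) (c x : R) : R :=
  2 * (INR n - 2) * (INR n - 1) * c ^ 2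
  / (sqrt (x ^ 2 + 4 * (INR n - 1) * c * x)) ^ 3.

Definition y_n (n : nat) : R :=
  4 * (1 - INR n)
  + 2 * (INR n ^ 2 - 4) / sqrt (2 * INR n - 5)
    * cos (/ 3 * atan ((INR n ^ 2 - 4 * INR n + 6)
                       / (2 * (INR n - 1) * sqrt (2 * INR n - 5)))).

Definition x0 (n : nat) (c : R) : R := y_n n * c.

Definition beta (n : nat) (c x : R) : R :=
  alpha n c (x0 n c) + alpha1 n c (x0 n c) * (x - x0 n c)
  + / 2 * alpha2 n c (x0 n c) * (x - x0 n c) ^ 2.

Definition gamma (n : nat) (c x : R) : R :=
  if Rle_dec (x0 n c) x then alpha n c x else beta n c x.

Definition has_deriv_nonneg (f f' : R -> R) : Prop :=
  forall x, 0 <= x -> forall eps, 0 < eps -> exists delta, 0 < delta /\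
    forall y, 0 <= y -> y <> x -> Rabs (y - x) < delta ->
      Rabs ((f y - f x) / (y - x) - f' x) < eps.

Definition cont_nonneg (f : R -> R) : Prop :=
  forall x, 0 <= x -> forall eps, 0 < eps -> exists delta, 0 < delta /\
    forall y, 0 <= y -> Rabs (y - x) < delta -> Rabs (f y - f x) < eps.

(* Main.v *)
Require Import Defs.
From Stdlib Require Import Reals Lra Psatz.
From Coquelicot Require Import Coquelicot.
Open Scope R_scope.

Lemma u_exists N c x : 3 <= N -> 0 < c -> 0 < x ->
  exists u, 1 < u /\ c = x*(u^2-1)/(4*(N-1)) /\ sqrt (x ^ 2 + 4 * (N - 1) * c * x) = u * x.
Proof.
  intros hN hc hx.
  set (s := sqrt (x ^ 2 + 4 * (N - 1) * c * x)).
  assert (hmc : 0 < (N-1)*c) by nra. assert (hmcx : 0 < (N-1)*c*x) by nra.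
  assert (hs2 : s*s = x ^ 2 + 4 * (N - 1) * c * x) by (apply sqrt_sqrt; nra).
  assert (hs : 0 <= s) by apply sqrt_pos.
  assert (hsx : x < s) by nra.
  exists (s/x). split; [|split].
  - apply (Rmult_lt_reg_r x); [lra|]. unfold Rdiv. rewrite Rmult_assoc, Rinv_l; lra.
  - field_simplify_eq; [|lra]. replace (s^2) with (s*s) by ring. rewrite hs2. field.
  - field. lra.
Qed.

Ltac prep N c x u hu :=
  let hN := fresh in let hc := fresh in let hx := fresh in
  let Hc := fresh in let Hs := fresh in
  match goal with |- _ => idtac end.

Lemma INR_ge3 n : (3 <= n)%nat -> 3 <= INR n.
Proof. intro h. apply le_INR in h. simpl in h. lra. Qed.

Lemma alpha_ode n c x : (3 <= n)%nat -> 0 < c -> 0 < x ->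
  (alpha n c x + INR n * c) * x * alpha1 n c x
   = 2*c*x + alpha n c x ^ 2 - INR n * c * alpha n c x.
Proof.
  intros hn hc hx. pose proof (INR_ge3 n hn) as hN.
  destruct (u_exists (INR n) c x hN hc hx) as [u [hu [Hc Hs]]].
  unfold alpha, alpha1. rewrite Hs. subst c. field. repeat split; lra.
Qed.

Lemma alpha_iii n c x : (3 <= n)%nat -> 0 < c -> 0 < x ->
  alpha n c x - x * alpha1 n c x > 0.
Proof.
  intros hn hc hx. pose proof (INR_ge3 n hn) as hN.
  destruct (u_exists (INR n) c x hN hc hx) as [u [hu [Hc Hs]]].
  unfold alpha, alpha1. rewrite Hs.
  assert (E : INR n * c + INR n / (2 * (INR n - 1)) * x -
    (INR n - 2) / (2 * (INR n - 1)) * (u * x) -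
    x * (INR n / (2 * (INR n - 1)) -
     (INR n - 2) / (2 * (INR n - 1)) * ((x + 2 * (INR n - 1) * c) / (u * x)))
    = c * ((INR n * u - (INR n - 2))/u)).
  { subst c. field. repeat split; lra. }
  rewrite E. apply Rmult_lt_0_compat; [lra|]. apply Rdiv_lt_0_compat; nra.
Qed.

Lemma alpha_v n c x : (3 <= n)%nat -> 0 < c -> 0 < x ->
  x / (INR n - 1) + 2 * c < alpha n c x /\ alpha n c x < x / (INR n - 1) + INR n * c.
Proof.
  intros hn hc hx. pose proof (INR_ge3 n hn) as hN.
  destruct (u_exists (INR n) c x hN hc hx) as [u [hu [Hc Hs]]].
  unfold alpha. rewrite Hs. subst c. split.
  - assert (E : INR n * (x * (u ^ 2 - 1) / (4 * (INR n - 1))) + INR n / (2 * (INR n - 1)) * x -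
      (INR n - 2) / (2 * (INR n - 1)) * (u * x) - (x / (INR n - 1) + 2 * (x * (u ^ 2 - 1) / (4 * (INR n - 1))))
      = (INR n - 2) * x * (u-1)^2 / (4*(INR n - 1))) by (field; lra).
    assert (0 < (INR n - 2) * x * (u-1)^2 / (4*(INR n - 1))).
    { apply Rdiv_lt_0_compat; [|lra]. apply Rmult_lt_0_compat; [nra|]. apply pow_lt; lra. }
    lra.
  - assert (E : x / (INR n - 1) + INR n * (x * (u ^ 2 - 1) / (4 * (INR n - 1))) -
      (INR n * (x * (u ^ 2 - 1) / (4 * (INR n - 1))) + INR n / (2 * (INR n - 1)) * x -
      (INR n - 2) / (2 * (INR n - 1)) * (u * x))
      = (INR n - 2) * x * (u-1) / (2*(INR n - 1))) by (field; lra).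
    assert (0 < (INR n - 2) * x * (u-1) / (2*(INR n - 1))).
    { apply Rdiv_lt_0_compat; [|lra]. apply Rmult_lt_0_compat; nra. }
    lra.
Qed.

Lemma alpha_vi n c x : (3 <= n)%nat -> 0 < c -> 0 < x ->
  (INR n - 2) / sqrt (INR n * (INR n - 1)) * sqrt (x * (alpha n c x - / INR n * x))
    + alpha n c x = 2 / INR n * x + INR n * c /\
  alpha n c x <= 2 / INR n * x + INR n * c.
Proof.
  intros hn hc hx. pose proof (INR_ge3 n hn) as hN.
  destruct (u_exists (INR n) c x hN hc hx) as [u [hu [Hc Hs]]].
  set (q := sqrt (INR n * (INR n - 1))).
  assert (hq : 0 < q) by (apply sqrt_lt_R0; nra).
  assert (hq2 : q * q = INR n * (INR n - 1)) by (apply sqrt_sqrt; nra).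
  unfold alpha. rewrite Hs. subst c.
  set (N := INR n) in *.
  assert (E : x * (N * (x * (u ^ 2 - 1) / (4 * (N - 1))) + N / (2 * (N - 1)) * x -
     (N - 2) / (2 * (N - 1)) * (u * x) - / N * x) = (x*(N*u-(N-2))/(2*q))^2).
  { replace ((x*(N*u-(N-2))/(2*q))^2) with ((x*(N*u-(N-2)))^2/(4*(q*q))) by (field; lra).
    rewrite hq2. field. split; lra. }
  rewrite E, sqrt_pow2.
  2:{ assert (0 < N*u - (N-2)) by nra. apply Rmult_le_pos; [nra|]. apply Rlt_le, Rinv_0_lt_compat; lra. }
  split.
  - replace ((N - 2) / q * (x * (N * u - (N - 2)) / (2 * q))) with
      ((N - 2) * (x * (N * u - (N - 2))) / (2 * (q * q))) by (field; lra).
    rewrite hq2. field. split; lra.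
  - assert (E2 : 2 / N * x + N * (x * (u ^ 2 - 1) / (4 * (N - 1))) -
      (N * (x * (u ^ 2 - 1) / (4 * (N - 1))) + N / (2 * (N - 1)) * x - (N - 2) / (2 * (N - 1)) * (u * x))
      = (N-2) * x * (N*u - (N-2)) / (2*N*(N-1))) by (field; split; lra).
    assert (0 <= (N-2) * x * (N*u - (N-2)) / (2*N*(N-1))).
    { apply Rmult_le_pos; [|apply Rlt_le, Rinv_0_lt_compat; nra]. apply Rmult_le_pos; nra. }
    lra.
Qed.

Definition pp (N u : R) := 2*(N^2-4*N+6)*u^3 - 3*(N^2-4)*u^2 + (N^2-4).

Lemma pp_neg N u u0 : 3 <= N -> 1 < u -> u <= u0 -> pp N u0 = 0 ->
  pp N u <= 0 /\ (pp N u = 0 -> u = u0).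
Proof.
  intros hN hu huu0 hp. unfold pp in *.
  set (a := 2*(N^2-4*N+6)). set (b := N^2-4).
  assert (hab : b <= a) by (unfold a, b; assert (0 <= (N-4)^2) by apply pow2_ge_0; nra).
  assert (hb : 0 < b) by (unfold b; nra).
  set (q1 := a*(1+u0+u0^2) - 3*b*(1+u0)).
  assert (E1 : (1-u0)*q1 = (20-8*N) - (2*(N^2-4*N+6)*u0^3 - 3*(N^2-4)*u0^2 + (N^2-4))) by (unfold q1,a,b; ring).
  rewrite hp in E1.
  assert (hq1 : 0 < q1) by nra.
  set (q := a*(u^2+u*u0+u0^2) - 3*b*(u+u0)).
  assert (E2 : q - q1 = (u-1)*(a*(u+1+u0) - 3*b)) by (unfold q, q1; ring).
  assert (h3 : 0 < a*(u+1+u0) - 3*b) by nra.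
  assert (hq : 0 < q) by nra.
  assert (E3 : a*u^3 - 3*b*u^2 + b = (u-u0)*q + (2*(N^2-4*N+6)*u0^3 - 3*(N^2-4)*u0^2 + (N^2-4))) by (unfold q, a, b; ring).
  rewrite hp, Rplus_0_r in E3.
  fold a b. rewrite E3. split; [nra|]. intro h.
  destruct (Rmult_integral _ _ h); lra.
Qed.

Lemma alpha_i n c x u : (3 <= n)%nat -> 0 < c -> 0 < x -> 1 < u ->
  c = x*(u^2-1)/(4*(INR n-1)) -> sqrt (x ^ 2 + 4 * (INR n - 1) * c * x) = u * x ->
  2 * x * alpha2 n c x + alpha1 n c x - 3 / (INR n + 2)
   = pp (INR n) u / (4*(INR n-1)*(INR n+2)*u^3).
Proof.
  intros hn hc hx hu Hc Hs. pose proof (INR_ge3 n hn) as hN.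
  unfold alpha1, alpha2, pp. rewrite Hs. subst c. field. repeat split; lra.
Qed.

Lemma beta_F n c x0 x : (3 <= n)%nat -> 0 < c -> 0 < x0 ->
  let B0 := alpha n c x0 in let B1 := alpha1 n c x0 in let B2 := alpha2 n c x0 in
  let be := B0 + B1*(x-x0) + /2*B2*(x-x0)^2 in let b1 := B1 + B2*(x-x0) in
  (be + INR n*c)*x*b1 - (2*c*x + be^2 - INR n*c*be)
   = 3*B2*(x-x0)^2*((INR n*c + x0*B1)/2 + (B1+x0*B2)*(x-x0)/6 + B2*(x-x0)^2/12).
Proof.
  intros hn hc hx0 B0 B1 B2 be b1. pose proof (INR_ge3 n hn) as hN.
  destruct (u_exists (INR n) c x0 hN hc hx0) as [u [hu [Hc Hs]]].
  unfold be, b1, B0, B1, B2, alpha, alpha1, alpha2. rewrite Hs. subst c. field. repeat split; lra.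
Qed.

Lemma beta_K n c x0 x : (3 <= n)%nat -> 0 < c -> 0 < x0 ->
  let B0 := alpha n c x0 in let B1 := alpha1 n c x0 in let B2 := alpha2 n c x0 in
  let be := B0 + B1*(x-x0) + /2*B2*(x-x0)^2 in
  let N := INR n in let s0 := sqrt (x0 ^ 2 + 4 * (INR n - 1) * c * x0) in
  let M := (N-2)^2/(N*(N-1)) in
  (2/N*x + N*c - be)^2 - M*(x*(be - /N*x))
   = (x-x0)^3 * (- (2*(2/N*x0+N*c - B0) + M*x0)*(N-2)*(N-1)*c^2*(x0+2*(N-1)*c)/s0^5
                 + B2^2/4*(x-x0)).
Proof.
  intros hn hc hx0 B0 B1 B2 be N s0 M. pose proof (INR_ge3 n hn) as hN.
  destruct (u_exists (INR n) c x0 hN hc hx0) as [u [hu [Hc Hs]]].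
  unfold be, B0, B1, B2, M, s0, N, alpha, alpha1, alpha2. rewrite Hs. subst c. field. repeat split; lra.
Qed.

Lemma alpha_signs n c x : (3 <= n)%nat -> 0 < c -> 0 < x ->
  INR n * c + x * alpha1 n c x > 0 /\ x^2 * alpha2 n c x < INR n * c /\
  alpha1 n c x < 1/(INR n - 1) /\ 0 < alpha2 n c x.
Proof.
  intros hn hc hx. pose proof (INR_ge3 n hn) as hN.
  destruct (u_exists (INR n) c x hN hc hx) as [u [hu [Hc Hs]]].
  unfold alpha1, alpha2. rewrite Hs. subst c. set (N := INR n) in *.
  assert (hNu : 0 < N*u - (N-2)) by nra.
  repeat split.
  - assert (E : N * (x * (u ^ 2 - 1) / (4 * (N - 1))) +
      x * (N / (2 * (N - 1)) - (N - 2) / (2 * (N - 1)) *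
       ((x + 2 * (N - 1) * (x * (u ^ 2 - 1) / (4 * (N - 1)))) / (u * x)))
      = x*(u^2+1)*(N*u-(N-2))/(4*(N-1)*u)) by (field; repeat split; lra).
    rewrite E. apply Rdiv_lt_0_compat; [|nra]. apply Rmult_lt_0_compat; [|lra]. nra.
  - assert (E : N * (x * (u ^ 2 - 1) / (4 * (N - 1))) -
      x ^ 2 * (2 * (N - 2) * (N - 1) * (x * (u ^ 2 - 1) / (4 * (N - 1))) ^ 2 / (u * x) ^ 3)
      = x*(u^2-1)*(2*N*u^3 - (N-2)*(u^2-1))/(8*(N-1)*u^3)) by (field; repeat split; lra).
    assert (0 < x*(u^2-1)*(2*N*u^3 - (N-2)*(u^2-1))/(8*(N-1)*u^3)).
    { apply Rdiv_lt_0_compat; [|apply Rmult_lt_0_compat; [lra|apply pow_lt; lra]].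
      apply Rmult_lt_0_compat; [apply Rmult_lt_0_compat; [lra|nra]|]. assert (h1: 0 < u^2-1) by nra. assert (h2: u^3 > u^2-1) by (simpl; nra). assert (h3 : (N-2)*(u^2-1) < (N-2)*u^3) by (apply Rmult_lt_compat_l; lra). assert (u^3>0) by (apply pow_lt; lra). nra. }
    lra.
  - assert (E : 1 / (N - 1) - (N / (2 * (N - 1)) - (N - 2) / (2 * (N - 1)) *
       ((x + 2 * (N - 1) * (x * (u ^ 2 - 1) / (4 * (N - 1)))) / (u * x)))
      = (N-2)*(u-1)^2/(4*(N-1)*u)) by (field; repeat split; lra).
    assert (0 < (N-2)*(u-1)^2/(4*(N-1)*u)).
    { apply Rdiv_lt_0_compat; [|nra]. apply Rmult_lt_0_compat; [lra|apply pow_lt; lra]. }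
    lra.
  - apply Rdiv_lt_0_compat; [|apply pow_lt; nra].
    apply Rmult_lt_0_compat; [nra|]. apply pow_lt. apply Rdiv_lt_0_compat; [apply Rmult_lt_0_compat; [lra|nra]|lra].
Qed.

Lemma alpha2_decr n c x y : (3 <= n)%nat -> 0 < c -> 0 < x -> x < y ->
  alpha2 n c y < alpha2 n c x.
Proof.
  intros hn hc hx hxy. pose proof (INR_ge3 n hn) as hN. unfold alpha2.
  set (N := INR n) in *.
  set (sx := sqrt (x ^ 2 + 4 * (N - 1) * c * x)).
  set (sy := sqrt (y ^ 2 + 4 * (N - 1) * c * y)).
  assert (hmc : 0 < (N-1)*c) by nra.
  assert (hsx : 0 < sx) by (apply sqrt_lt_R0; nra).
  assert (hs : sx < sy) by (apply sqrt_lt_1; nra).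
  assert (hK : 0 < 2 * (N - 2) * (N - 1) * c ^ 2) by (apply Rmult_lt_0_compat; [nra|apply pow_lt; lra]).
  apply Rmult_lt_compat_l; [exact hK|].
  apply Rinv_lt_contravar. apply Rmult_lt_0_compat; apply pow_lt; lra.
  simpl. assert (sx*sx < sy*sy) by nra. assert (0 < sx*sx) by nra. nra.
Qed.

Lemma cos3 t : cos (3*t) = 4*cos t^3 - 3*cos t.
Proof.
  replace (3*t) with (2*t + t) by ring.
  rewrite cos_plus, sin_2a, cos_2a_cos.
  pose proof (sin2 t) as H. unfold Rsqr in H.
  replace (2 * sin t * cos t * sin t) with (2*cos t*(sin t * sin t)) by ring. rewrite H. ring.
Qed.


Lemma cubic_core (N sq C : R) : 3 <= N -> 0 < sq -> sq*sq = 2*N-5 -> 1/2 < C ->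
  4*C^3 - 3*C = 2*(N-1)*sq/(N^2-4) ->
  let z := 2*(N^2-4)/sq*C in
  4*(N-1) < z /\ (2*N-5)*z^3 - 3*(N^2-4)^2*z - 4*(N^2-4)^2*(N-1) = 0.
Proof.
  intros hN hsq hsq2 hC hcub z.
  assert (hb : 0 < N^2-4) by nra.
  assert (hz : z = 2*(N^2-4)/sq*C) by reflexivity.
  assert (hcubic : (2*N-5)*z^3 - 3*(N^2-4)^2*z - 4*(N^2-4)^2*(N-1) = 0).
  { rewrite hz. 
    assert (E : C^3 = (3*C + 2*(N-1)*sq/(N^2-4))/4) by lra.
    replace ((2*N-5)*(2*(N^2-4)/sq*C)^3) with (8*(N^2-4)^3/sq*C^3).
    2:{ rewrite <- hsq2. field. lra. }
    rewrite E. field. split; lra. }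
  split; [|exact hcubic].
  set (r := (N^2-4)/sq).
  assert (hr : 0 < r) by (unfold r; apply Rdiv_lt_0_compat; lra).
  assert (hzr : z > r). { assert (z = 2*r*C) as ->. { rewrite hz; unfold r; field; lra. } nra. }
  assert (hr2 : (2*N-5)*(r*r) = (N^2-4)^2).
  { unfold r. rewrite <- hsq2. field. lra. }
  destruct (Rle_or_lt (4*(N-1)) r) as [h|h]; [lra|].
  (* f increasing on [r, oo) *)
  assert (f4 : (2*N-5)*(4*(N-1))^3 - 3*(N^2-4)^2*(4*(N-1)) - 4*(N^2-4)^2*(N-1) < 0).
  { assert (E2 : (2*N-5)*(4*(N-1))^3 - 3*(N^2-4)^2*(4*(N-1)) - 4*(N^2-4)^2*(N-1)
               = -16*(N-1)*(N^2-4*N+6)^2) by ring.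
    rewrite E2. assert (h6: 0 < N^2-4*N+6) by nra. assert (0 < (N^2-4*N+6)^2) by (apply pow_lt; lra). nra. }
  assert (h5 : 0 < 2*N-5) by lra.
  destruct (Rle_or_lt z (4*(N-1))) as [hz4|hz4]; [|lra].
  exfalso.
  assert (Hd : (2*N-5)*z^3 - 3*(N^2-4)^2*z - ((2*N-5)*(4*(N-1))^3 - 3*(N^2-4)^2*(4*(N-1)))
     = (z - 4*(N-1))*((2*N-5)*(z*z + z*(4*(N-1)) + (4*(N-1))*(4*(N-1))) - 3*(N^2-4)^2)) by ring.
  assert (Q : (2*N-5)*(z*z + z*(4*(N-1)) + (4*(N-1))*(4*(N-1))) - 3*(N^2-4)^2 > 0).
  { rewrite <- hr2. assert (z*z + z*(4*(N-1)) + (4*(N-1))*(4*(N-1)) > 3*(r*r)) by nra. nra. }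
  nra.
Qed.

Lemma yn_props n : (3 <= n)%nat ->
  4*(INR n-1) < y_n n + 4*(INR n - 1) /\
  (2*INR n-5)*(y_n n + 4*(INR n-1))^3 - 3*(INR n^2-4)^2*(y_n n + 4*(INR n-1))
     - 4*(INR n^2-4)^2*(INR n-1) = 0.
Proof.
  intro hn. pose proof (INR_ge3 n hn) as hN. set (N := INR n) in *.
  set (sq := sqrt (2*N-5)).
  assert (hsq : 0 < sq) by (apply sqrt_lt_R0; lra).
  assert (hsq2 : sq*sq = 2*N-5) by (apply sqrt_sqrt; lra).
  set (v := (N^2-4*N+6)/(2*(N-1)*sq)).
  assert (hv : 0 < v). { unfold v. apply Rdiv_lt_0_compat; nra. }
  set (th := /3 * atan v).
  assert (ha : 0 < atan v < PI/2).
  { split. rewrite <- atan_0. apply atan_increasing; lra. pose proof (atan_bound v); lra. }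
  assert (hC : 1/2 < cos th).
  { rewrite <- cos_PI3. apply cos_decreasing_1; unfold th; pose proof PI_RGT_0; lra. }
  assert (hcub : 4*cos th^3 - 3*cos th = 2*(N-1)*sq/(N^2-4)).
  { rewrite <- cos3. replace (3*th) with (atan v) by (unfold th; field).
    rewrite cos_atan.
    assert (E : 1 + v² = ((N^2-4)/(2*(N-1)*sq))²).
    { unfold v, Rsqr. field_simplify_eq; [|split; lra]. 
      replace (sq^2) with (2*N-5) by (rewrite <- hsq2; ring). 
      replace (sq^4) with ((2*N-5)^2) by (rewrite <- hsq2; ring). ring. }
    rewrite E, sqrt_Rsqr. field. split; [nra|split; lra].
    apply Rlt_le, Rdiv_lt_0_compat; nra. }
  destruct (cubic_core N sq (cos th) hN hsq hsq2 hC hcub) as [h1 h2].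
  assert (Ey : y_n n + 4*(N-1) = 2*(N^2-4)/sq*cos th).
  { unfold y_n. fold N. fold sq. fold v. fold th. ring. }
  rewrite Ey. split; assumption.
Qed.

Lemma x0_props n c : (3 <= n)%nat -> 0 < c ->
  0 < x0 n c /\ exists u0, 1 < u0 /\ x0 n c * (u0^2-1) = 4*(INR n-1)*c /\
   2*(INR n^2-4*INR n+6)*u0^3 - 3*(INR n^2-4)*u0^2 + (INR n^2-4) = 0.
Proof.
  intros hn hc. pose proof (INR_ge3 n hn) as hN.
  destruct (yn_props n hn) as [h1 h2].
  unfold x0. set (N := INR n) in *. set (y := y_n n) in *.
  assert (hy : 0 < y) by lra.
  split; [nra|].
  set (z := y + 4*(N-1)) in *.
  assert (key : (2*(N^2-4*N+6))^2*z^3 = 4*(N^2-4)^2*y*(y+6*(N-1))^2).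
  { assert (E : (2*(N^2-4*N+6))^2*z^3 - 4*(N^2-4)^2*y*(y+6*(N-1))^2 =
       -16*(N-1)^2*((2*N-5)*z^3 - 3*(N^2-4)^2*z - 4*(N^2-4)^2*(N-1))).
    { unfold z. ring. }
    rewrite h2 in E. lra. }
  set (w := z/y).
  assert (hw : 1 < w). { assert (E: w - 1 = 4*(N-1)/y) by (unfold w, z; field; lra). assert (0 < 4*(N-1)/y) by (apply Rdiv_lt_0_compat; lra). lra. }
  exists (sqrt w).
  assert (hu2 : sqrt w * sqrt w = w) by (apply sqrt_sqrt; lra).
  assert (hu : 1 < sqrt w). { rewrite <- sqrt_1. apply sqrt_lt_1; lra. }
  split; [exact hu|split].
  - replace (sqrt w ^2) with w by (simpl; lra). unfold w, z. field. lra.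
  - set (u := sqrt w) in *.
    assert (hb : 0 < N^2-4) by nra.
    assert (ha : 0 < N^2-4*N+6) by nra.
    set (U := 2*(N^2-4*N+6)*u^3). set (V := (N^2-4)*(3*u^2-1)).
    assert (hU : 0 < U) by (unfold U; apply Rmult_lt_0_compat; [lra| apply pow_lt; lra]).
    assert (hV : 0 < V) by (unfold V; apply Rmult_lt_0_compat; nra).
    assert (UV : U*U = V*V).
    { unfold U, V. replace (u^3) with (u*(u*u)) by ring. replace (u^2) with (u*u) by ring.
      rewrite hu2.
      replace ((2 * (N ^ 2 - 4 * N + 6) * (u * w)) * (2 * (N ^ 2 - 4 * N + 6) * (u * w)))
        with ((2*(N^2-4*N+6))^2 * (u*u) * w*w) by ring. rewrite hu2.
      unfold w. apply (Rmult_eq_reg_r (y^3)); [|apply pow_nonzero; lra].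
      field_simplify; try lra.
      transitivity ((2*(N^2-4*N+6))^2*z^3); [ring|]. rewrite key. unfold z. ring. }
    assert (U = V) by nra.
    replace (u^3) with (U/(2*(N^2-4*N+6))) by (unfold U; field; lra).
    unfold V in H. rewrite H. field.
Qed.


Lemma deriv_alpha n c x : (3 <= n)%nat -> 0 < c -> 0 < x ->
  derivable_pt_lim (alpha n c) x (alpha1 n c x).
Proof.
  intros hn hc hx. pose proof (INR_ge3 n hn) as hN.
  apply is_derive_Reals. unfold alpha, alpha1.
  assert (hpos : 0 < x ^ 2 + 4 * (INR n - 1) * c * x).
  { assert (0 < (INR n - 1)*c*x) by (apply Rmult_lt_0_compat; [nra|lra]). nra. }
  auto_derive.
  - exact hpos.
  - assert (0 < sqrt (x ^ 2 + 4 * (INR n - 1) * c * x)) by (apply sqrt_lt_R0; lra).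
    replace (x*(x*1)) with (x^2) by ring. set (s := sqrt (x ^ 2 + 4 * (INR n - 1) * c * x)) in *. field. repeat split; lra.
Qed.

Lemma deriv_alpha1 n c x : (3 <= n)%nat -> 0 < c -> 0 < x ->
  derivable_pt_lim (alpha1 n c) x (alpha2 n c x).
Proof.
  intros hn hc hx. pose proof (INR_ge3 n hn) as hN.
  apply is_derive_Reals. unfold alpha1, alpha2.
  assert (hpos : 0 < x ^ 2 + 4 * (INR n - 1) * c * x).
  { assert (0 < (INR n - 1)*c*x) by (apply Rmult_lt_0_compat; [nra|lra]). nra. }
  assert (hs : 0 < sqrt (x ^ 2 + 4 * (INR n - 1) * c * x)) by (apply sqrt_lt_R0; lra).
  auto_derive.
  - replace (x*(x*1)) with (x^2) by ring. repeat split; try lra.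
  - replace (x*(x*1)) with (x^2) by ring.
    destruct (u_exists (INR n) c x hN hc hx) as [u [hu [Hc Hs]]].
    rewrite Hs. subst c. field. repeat split; lra.
Qed.

Lemma cont_alpha n c x : (3 <= n)%nat -> 0 < c -> 0 <= x -> continuity_pt (alpha n c) x.
Proof.
  intros hn hc hx. pose proof (INR_ge3 n hn) as hN.
  set (Q := fun x => x ^ 2 + 4 * (INR n - 1) * c * x).
  assert (hQ : continuity_pt (fun x => sqrt (Q x)) x).
  { apply (continuity_pt_comp Q sqrt).
    - unfold Q. apply derivable_continuous_pt. reg.
    - apply continuity_pt_sqrt. unfold Q. assert (0 <= (INR n - 1)*c*x) by (apply Rmult_le_pos; nra). nra. }
  set (P := fun x => INR n * c + INR n / (2 * (INR n - 1)) * x).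
  assert (hP : continuity_pt P x) by (unfold P; apply derivable_continuous_pt; reg).
  set (K := (INR n - 2) / (2 * (INR n - 1))).
  change (continuity_pt (P - mult_real_fct K (fun x => sqrt (Q x)))%F x). apply continuity_pt_minus; [exact hP|]. apply continuity_pt_scal. exact hQ.
Qed.

Lemma MVT_open f f' a b : a < b -> (forall t, a < t < b -> derivable_pt_lim f t (f' t)) ->
  (forall t, a <= t <= b -> continuity_pt f t) ->
  exists t, a < t < b /\ f b - f a = f' t * (b - a).
Proof.
  intros hab hd hc.
  assert (pr1 : forall t, a < t < b -> derivable_pt f t).
  { intros t ht. exists (f' t). apply hd, ht. }
  destruct (MVT f id a b pr1 (fun t _ => derivable_pt_id t) hab hc
     (fun t _ => derivable_continuous_pt id t (derivable_pt_id t))) as [t [P E]].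
  exists t. split; [exact P|].
  rewrite derive_pt_id in E. rewrite (derive_pt_eq_0 f t (f' t) (pr1 t P) (hd t P)) in E.
  unfold id in E. lra.
Qed.

Lemma deriv_beta n c x :
  derivable_pt_lim (beta n c) x (alpha1 n c (x0 n c) + alpha2 n c (x0 n c) * (x - x0 n c)).
Proof.
  apply is_derive_Reals. unfold beta. auto_derive; [exact I|]. field.
Qed.

Lemma deriv_beta1 n c x :
  derivable_pt_lim (fun x => alpha1 n c (x0 n c) + alpha2 n c (x0 n c) * (x - x0 n c)) x
    (alpha2 n c (x0 n c)).
Proof.
  apply is_derive_Reals. auto_derive; [exact I|]. ring.
Qed.


Definition D1f n c x := alpha1 n c x - (alpha1 n c (x0 n c) + alpha2 n c (x0 n c) * (x - x0 n c)).
Definition D2f n c x := alpha2 n c x - alpha2 n c (x0 n c).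

Lemma D1_neg n c x : (3 <= n)%nat -> 0 < c -> 0 < x0 n c -> 0 < x -> x <> x0 n c -> D1f n c x < 0.
Proof.
  intros hn hc ha hx hxa. set (a := x0 n c) in *.
  assert (hd : forall t, 0 < t -> derivable_pt_lim (D1f n c) t (D2f n c t)).
  { intros t ht. unfold D1f, D2f. apply derivable_pt_lim_minus.
    - apply deriv_alpha1; assumption.
    - apply deriv_beta1. }
  assert (hD1a : D1f n c a = 0) by (unfold D1f; fold a; ring).
  destruct (Rlt_or_le x a) as [h|h].
  - destruct (MVT_cor2 (D1f n c) (D2f n c) x a h (fun t ht => hd t ltac:(lra))) as [t [E ht]].
    assert (D2f n c t > 0) by (unfold D2f; fold a; pose proof (alpha2_decr n c t a hn hc ltac:(lra) ltac:(lra)); lra).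
    rewrite hD1a in E. nra.
  - assert (h' : a < x) by lra.
    destruct (MVT_cor2 (D1f n c) (D2f n c) a x h' (fun t ht => hd t ltac:(lra))) as [t [E ht]].
    assert (D2f n c t < 0) by (unfold D2f; fold a; pose proof (alpha2_decr n c a t hn hc ltac:(lra) ltac:(lra)); lra).
    rewrite hD1a in E. nra.
Qed.

Lemma D_sign n c : (3 <= n)%nat -> 0 < c -> 0 < x0 n c -> forall x, 0 <= x ->
  (x < x0 n c -> beta n c x < alpha n c x) /\ (x0 n c < x -> alpha n c x < beta n c x).
Proof.
  intros hn hc ha x hx.
  set (D := fun t => alpha n c t - beta n c t).
  assert (hd : forall t, 0 < t -> derivable_pt_lim D t (D1f n c t)).
  { intros t ht. unfold D, D1f. apply derivable_pt_lim_minus.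
    - apply deriv_alpha; assumption.
    - apply deriv_beta. }
  assert (hcont : forall t, 0 <= t -> continuity_pt D t).
  { intros t ht. unfold D. apply continuity_pt_minus.
    - apply cont_alpha; assumption.
    - apply derivable_continuous_pt. exists (alpha1 n c (x0 n c) + alpha2 n c (x0 n c) * (t - x0 n c)).
      apply deriv_beta. }
  assert (hDa : D (x0 n c) = 0).
  { unfold D, beta. replace (x0 n c - x0 n c) with 0 by ring. ring. }
  split; intro h.
  - destruct (MVT_open D (D1f n c) x (x0 n c) h (fun t ht => hd t ltac:(lra)) (fun t ht => hcont t ltac:(lra)))
      as [t [ht E]].
    pose proof (D1_neg n c t hn hc ha ltac:(lra) ltac:(lra)). rewrite hDa in E. unfold D in E. nra.
  - destruct (MVT_open D (D1f n c) (x0 n c) x h (fun t ht => hd t ltac:(lra)) (fun t ht => hcont t ltac:(lra)))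
      as [t [ht E]].
    pose proof (D1_neg n c t hn hc ha ltac:(lra) ltac:(lra)). rewrite hDa in E. unfold D in E. nra.
Qed.

Lemma cont_alpha2 n c x : (3 <= n)%nat -> 0 < c -> 0 < x -> continuity_pt (alpha2 n c) x.
Proof.
  intros hn hc hx. pose proof (INR_ge3 n hn) as hN.
  cut (ex_derive (alpha2 n c) x).
  { intros [l Hl]. apply derivable_continuous_pt. exists l. apply is_derive_Reals. exact Hl. }
  assert (hpos : 0 < x ^ 2 + 4 * (INR n - 1) * c * x).
  { assert (0 < (INR n - 1)*c*x) by (apply Rmult_lt_0_compat; [nra|lra]). nra. }
  assert (hs : 0 < sqrt (x ^ 2 + 4 * (INR n - 1) * c * x)) by (apply sqrt_lt_R0; lra).
  unfold alpha2. auto_derive. replace (x*(x*1)) with (x^2) by ring. repeat split; try lra.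
  set (s := sqrt (x ^ 2 + 4 * (INR n - 1) * c * x)) in *. assert (0 < s*(s*(s*1))) by (apply Rmult_lt_0_compat; [lra|nra]). lra.
Qed.

Lemma lim_y f x l : derivable_pt_lim f x l -> forall eps, 0 < eps -> exists delta, 0 < delta /\
  forall y, y <> x -> Rabs (y - x) < delta -> Rabs ((f y - f x)/(y - x) - l) < eps.
Proof.
  intros H eps heps. destruct (H eps heps) as [d Hd]. exists d. split; [apply cond_pos|].
  intros y hy hyd. replace y with (x + (y - x)) at 1 by ring. apply Hd; [lra|exact hyd].
Qed.

Lemma glue_deriv (f f1 f2 d1 d2 : R -> R) (a : R) :
  (forall x, f x = if Rle_dec a x then f2 x else f1 x) ->
  f1 a = f2 a ->
  (forall x, x <= a -> derivable_pt_lim f1 x (d1 x)) ->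
  (forall x, a <= x -> derivable_pt_lim f2 x (d2 x)) ->
  d1 a = d2 a ->
  has_deriv_nonneg f (fun x => if Rle_dec a x then d2 x else d1 x).
Proof.
  intros Hf H12 Hd1 Hd2 Hd12 x _ eps heps.
  destruct (Rtotal_order x a) as [h|[h|h]].
  - destruct (lim_y f1 x (d1 x) (Hd1 x ltac:(lra)) eps heps) as [d [hd H]].
    exists (Rmin d (a - x)). split; [apply Rmin_glb_lt; lra|].
    intros y _ hyx hyd. pose proof (Rmin_l d (a-x)). pose proof (Rmin_r d (a-x)).
    assert (hy : y < a) by (apply Rabs_def2 in hyd; lra).
    rewrite (Hf y), (Hf x). destruct (Rle_dec a y); [lra|]. destruct (Rle_dec a x); [lra|].
    apply H; [exact hyx|lra].
  - subst x.
    destruct (lim_y f1 a (d1 a) (Hd1 a ltac:(lra)) eps heps) as [d [hd H]].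
    destruct (lim_y f2 a (d2 a) (Hd2 a ltac:(lra)) eps heps) as [d' [hd' H']].
    exists (Rmin d d'). split; [apply Rmin_glb_lt; lra|].
    intros y _ hyx hyd. pose proof (Rmin_l d d'). pose proof (Rmin_r d d').
    rewrite (Hf y), (Hf a). destruct (Rle_dec a a) as [_|n0]; [|lra].
    destruct (Rle_dec a y).
    + apply H'; [exact hyx|lra].
    + rewrite <- H12, <- Hd12. apply H; [exact hyx|lra].
  - destruct (lim_y f2 x (d2 x) (Hd2 x ltac:(lra)) eps heps) as [d [hd H]].
    exists (Rmin d (x - a)). split; [apply Rmin_glb_lt; lra|].
    intros y _ hyx hyd. pose proof (Rmin_l d (x-a)). pose proof (Rmin_r d (x-a)).
    assert (hy : a < y) by (apply Rabs_def2 in hyd; lra).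
    rewrite (Hf y), (Hf x). destruct (Rle_dec a y); [|lra]. destruct (Rle_dec a x); [|lra].
    apply H; [exact hyx|lra].
Qed.

Lemma cont_y f x : continuity_pt f x -> forall eps, 0 < eps -> exists delta, 0 < delta /\
  forall y, Rabs (y - x) < delta -> Rabs (f y - f x) < eps.
Proof.
  intros H eps heps. destruct (H eps heps) as [d [hd Hd]]. exists d. split; [exact hd|].
  intros y hy. destruct (Req_dec y x) as [->|hne].
  - rewrite Rminus_diag, Rabs_R0. exact heps.
  - apply Hd. split; [split; [exact I|auto]|exact hy].
Qed.

Lemma glue_cont (f f1 f2 : R -> R) (a : R) :
  (forall x, f x = if Rle_dec a x then f2 x else f1 x) ->
  f1 a = f2 a ->
  (forall x, x <= a -> continuity_pt f1 x) ->
  (forall x, a <= x -> continuity_pt f2 x) ->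
  cont_nonneg f.
Proof.
  intros Hf H12 Hc1 Hc2 x _ eps heps.
  destruct (Rtotal_order x a) as [h|[h|h]].
  - destruct (cont_y f1 x (Hc1 x ltac:(lra)) eps heps) as [d [hd H]].
    exists (Rmin d (a - x)). split; [apply Rmin_glb_lt; lra|].
    intros y _ hyd. pose proof (Rmin_l d (a-x)). pose proof (Rmin_r d (a-x)).
    assert (hy : y < a) by (apply Rabs_def2 in hyd; lra).
    rewrite (Hf y), (Hf x). destruct (Rle_dec a y); [lra|]. destruct (Rle_dec a x); [lra|].
    apply H; lra.
  - subst x.
    destruct (cont_y f1 a (Hc1 a ltac:(lra)) eps heps) as [d [hd H]].
    destruct (cont_y f2 a (Hc2 a ltac:(lra)) eps heps) as [d' [hd' H']].
    exists (Rmin d d'). split; [apply Rmin_glb_lt; lra|].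
    intros y _ hyd. pose proof (Rmin_l d d'). pose proof (Rmin_r d d').
    rewrite (Hf y), (Hf a). destruct (Rle_dec a a) as [_|n0]; [|lra].
    destruct (Rle_dec a y).
    + apply H'; lra.
    + rewrite <- H12. apply H; lra.
  - destruct (cont_y f2 x (Hc2 x ltac:(lra)) eps heps) as [d [hd H]].
    exists (Rmin d (x - a)). split; [apply Rmin_glb_lt; lra|].
    intros y _ hyd. pose proof (Rmin_l d (x-a)). pose proof (Rmin_r d (x-a)).
    assert (hy : a < y) by (apply Rabs_def2 in hyd; lra).
    rewrite (Hf y), (Hf x). destruct (Rle_dec a y); [|lra]. destruct (Rle_dec a x); [|lra].
    apply H; lra.
Qed.

Lemma alpha_0 n c : alpha n c 0 = INR n * c.
Proof.
  unfold alpha. replace (0 ^ 2 + 4 * (INR n - 1) * c * 0) with 0 by ring. rewrite sqrt_0. ring.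
Qed.

Lemma alpha_upper n c x : (3 <= n)%nat -> 0 < c -> 0 <= x ->
  alpha n c x <= x / (INR n - 1) + INR n * c /\ alpha n c x <= 2 / INR n * x + INR n * c.
Proof.
  intros hn hc hx. destruct (Req_dec x 0) as [->|h].
  - rewrite alpha_0. split; unfold Rdiv; lra.
  - split; [apply Rlt_le, (alpha_v n c x hn hc ltac:(lra))|apply (alpha_vi n c x hn hc ltac:(lra))].
Qed.

Lemma sqrt_bound (N w R M: R) : 0 < N*(N-1) -> 0 <= w -> 0 <= R -> 0 <= N-2 ->
  M = (N-2)^2/(N*(N-1)) -> R^2 - M*w > 0 ->
  (N - 2) / sqrt (N * (N - 1)) * sqrt w < R.
Proof.
  intros hq hw hR hN2 hM hK.
  set (q := sqrt (N*(N-1))). assert (hq0 : 0 < q) by (apply sqrt_lt_R0; lra).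
  assert (hq2 : q*q = N*(N-1)) by (apply sqrt_sqrt; lra).
  assert (hw2 : sqrt w * sqrt w = w) by (apply sqrt_sqrt; lra).
  set (A := (N - 2) / q * sqrt w).
  assert (hA : 0 <= A) by (unfold A; apply Rmult_le_pos; [apply Rmult_le_pos; [lra|apply Rlt_le, Rinv_0_lt_compat; lra]|apply sqrt_pos]).
  assert (hA2 : A*A = M*w).
  { unfold A. replace ((N - 2) / q * sqrt w * ((N - 2) / q * sqrt w)) with ((N-2)^2*(sqrt w * sqrt w)/(q*q)) by (field; lra).
    rewrite hq2, hw2, hM. field. lra. }
  nra.
Qed.

Lemma bracket_pos (Nc a B1 B2 t : R) : 0 < a -> 0 < B2 -> Nc + a*B1 > 0 -> a^2*B2 < Nc ->
  -a <= t <= 0 -> (Nc + a*B1)/2 + (B1 + a*B2)*t/6 + B2*t^2/12 > 0.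
Proof.
  intros ha hB2 hP hQ ht.
  assert (hsq : 0 <= B2*t^2) by (apply Rmult_le_pos; [lra|apply pow2_ge_0]).
  destruct (Rle_or_lt 0 (B1 + a*B2)) as [h|h].
  - assert ((B1 + a*B2)*t >= -(B1+a*B2)*a) by nra.
    assert (a*(B1 + a*B2) = a*B1 + a^2*B2) by ring. nra.
  - assert ((B1 + a*B2)*t >= 0) by nra. nra.
Qed.

Lemma sqrt_from_u N c x u : 0 < x -> 0 < u -> x*(u^2-1) = 4*(N-1)*c ->
  sqrt (x ^ 2 + 4 * (N - 1) * c * x) = u * x.
Proof.
  intros hx hu H. replace (x ^ 2 + 4 * (N - 1) * c * x) with ((u*x)^2).
  - apply sqrt_pow2. nra.
  - rewrite <- H. ring.
Qed.

Theorem mainTheorem8 (n : nat) (c : R) (hn : (3 <= n)%nat) (hc : 0 < c) :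
  exists g1 g2 : R -> R,
    has_deriv_nonneg (gamma n c) g1 /\
    has_deriv_nonneg g1 g2 /\
    cont_nonneg g2 /\
    forall x, 0 <= x ->
      (* (i) *)
      (2 * x * g2 x + g1 x <= 3 / (INR n + 2) /\
       (2 * x * g2 x + g1 x = 3 / (INR n + 2) <-> x = x0 n c)) /\
      (* (ii) *)
      ((gamma n c x + INR n * c) * x * g1 x
         >= 2 * c * x + gamma n c x ^ 2 - INR n * c * gamma n c x /\
       ((gamma n c x + INR n * c) * x * g1 x
          = 2 * c * x + gamma n c x ^ 2 - INR n * c * gamma n c x
        <-> x >= x0 n c)) /\
      (* (iii) *)
      gamma n c x > x * g1 x /\
      (* (iv) *)
      gamma n c x = Rmin (alpha n c x) (beta n c x) /\
      (* (v) *)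
      (x / (INR n - 1) + 2 * c < gamma n c x /\
       gamma n c x < x / (INR n - 1) + INR n * c) /\
      (* (vi) *)
      (INR n - 2) / sqrt (INR n * (INR n - 1))
        * sqrt (x * (gamma n c x - / INR n * x)) + gamma n c x
        <= 2 / INR n * x + INR n * c.
Proof.
  pose proof (INR_ge3 n hn) as hN.
  destruct (x0_props n c hn hc) as [hx0 [u0 [hu0 [Hu0 Hpp]]]].
  exists (fun x => if Rle_dec (x0 n c) x then alpha1 n c x
                   else alpha1 n c (x0 n c) + alpha2 n c (x0 n c) * (x - x0 n c)).
  exists (fun x => if Rle_dec (x0 n c) x then alpha2 n c x else alpha2 n c (x0 n c)).
  split; [|split; [|split]].
  - apply (glue_deriv (gamma n c) (beta n c) (alpha n c)
      (fun x => alpha1 n c (x0 n c) + alpha2 n c (x0 n c) * (x - x0 n c)) (alpha1 n c) (x0 n c)).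
    + intro x. reflexivity.
    + unfold beta. replace (x0 n c - x0 n c) with 0 by ring. field.
    + intros x _. apply deriv_beta.
    + intros x hx. apply deriv_alpha; [exact hn|exact hc|lra].
    + ring.
  - apply (glue_deriv _ (fun x => alpha1 n c (x0 n c) + alpha2 n c (x0 n c) * (x - x0 n c))
      (alpha1 n c) (fun _ => alpha2 n c (x0 n c)) (alpha2 n c) (x0 n c)).
    + intro x. reflexivity.
    + ring.
    + intros x _. apply deriv_beta1.
    + intros x hx. apply deriv_alpha1; [exact hn|exact hc|lra].
    + reflexivity.
  - apply (glue_cont _ (fun _ => alpha2 n c (x0 n c)) (alpha2 n c) (x0 n c)).
    + intro x. reflexivity.
    + reflexivity.
    + intros x _. apply continuity_pt_const. intros ? ?. reflexivity.
    + intros x hx. apply cont_alpha2; [exact hn|exact hc|lra].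
  -
    set (a := x0 n c) in *.
    set (N := INR n) in *.
    assert (hsa : sqrt (a ^ 2 + 4 * (N - 1) * c * a) = u0 * a) by (apply sqrt_from_u; lra).
    assert (hca : c = a*(u0^2-1)/(4*(N-1))) by (rewrite Hu0; field; lra).
    destruct (alpha_signs n c a hn hc hx0) as [hP [hQ [hB1m hB2]]].
    pose proof (alpha_iii n c a hn hc hx0) as hiii0.
    pose proof (alpha_v n c a hn hc hx0) as [hv0 _].
    pose proof (alpha_vi n c a hn hc hx0) as [_ hvi0].
    change (INR n) with N in hP, hQ, hB1m, hB2, hiii0, hv0, hvi0.
    assert (hi0 : 2 * a * alpha2 n c a + alpha1 n c a = 3 / (N + 2)).
    { pose proof (alpha_i n c a u0 hn hc hx0 hu0 hca hsa) as E.
      fold N in E. change (pp N u0 = 0) in Hpp. rewrite Hpp in E. unfold Rdiv at 2 in E. lra. }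
    set (B0 := alpha n c a) in *. set (B1 := alpha1 n c a) in *. set (B2 := alpha2 n c a) in *.
    assert (hbeta : forall x, beta n c x = B0 + B1*(x-a) + /2*B2*(x-a)^2) by reflexivity.
    intros x hx. unfold gamma. fold a.
    destruct (Rle_dec a x) as [hle|hlt].
    +
      assert (hxp : 0 < x) by lra.
      destruct (u_exists N c x hN hc hxp) as [u [hu [Hc Hs]]].
      assert (hxu : x*(u^2-1) = a*(u0^2-1)) by (rewrite Hu0, Hc; field; lra).
      assert (huu0 : u <= u0).
      { destruct (Rle_or_lt u u0) as [h|h]; [exact h|]. exfalso.
        assert (u^2 > u0^2) by nra. assert (u0^2 - 1 > 0) by nra. nra. }
      destruct (pp_neg N u u0 hN hu huu0 Hpp) as [hpp1 hpp2].
      pose proof (alpha_i n c x u hn hc hxp hu Hc Hs) as Ei. fold N in Ei.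
      assert (hD : 0 < 4*(N-1)*(N+2)*u^3) by (apply Rmult_lt_0_compat; [nra|apply pow_lt; lra]).
      split; [|split; [|split; [|split; [|split]]]].
      * split.
        -- assert (pp N u / (4*(N-1)*(N+2)*u^3) <= 0).
           { unfold Rdiv. apply Rmult_le_0_r; [exact hpp1|apply Rlt_le, Rinv_0_lt_compat; exact hD]. }
           lra.
        -- split; intro h.
           ++ assert (E0 : pp N u / (4*(N-1)*(N+2)*u^3) = 0) by lra.
              assert (pp N u = 0).
              { apply (Rmult_eq_reg_r (/ (4*(N-1)*(N+2)*u^3))); [|apply Rinv_neq_0_compat; lra].
                rewrite Rmult_0_l. exact E0. }
              assert (u = u0) by (apply hpp2; assumption). subst u.
              assert (u0^2-1 > 0) by nra. nra.
           ++ subst x. assert (u^2 = u0^2) by nra. assert (u = u0) by nra. subst u.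
              change (pp N u0 = 0) in Hpp. rewrite Hpp in Ei. unfold Rdiv at 1 in Ei. lra.
      * pose proof (alpha_ode n c x hn hc hxp) as Eo. fold N in Eo.
        split; [lra|]. split; intro; lra.
      * pose proof (alpha_iii n c x hn hc hxp). lra.
      * destruct (Req_dec x a) as [->|hne].
        -- rewrite Rmin_left; [reflexivity|]. rewrite hbeta. replace (a-a) with 0 by ring. apply Req_le. unfold B0. field.
        -- destruct (D_sign n c hn hc hx0 x hx) as [_ h2]. rewrite Rmin_left; [reflexivity|].
           fold a in h2. apply Rlt_le, h2. lra.
      * apply alpha_v; assumption.
      * pose proof (alpha_vi n c x hn hc hxp) as [h _]. fold N in h. lra.
    +
      assert (hxa : x < a) by lra.
      destruct (D_sign n c hn hc hx0 x hx) as [hD1 _]. fold a in hD1.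
      specialize (hD1 hxa).
      destruct (alpha_upper n c x hn hc hx) as [hup1 hup2]. fold N in hup1, hup2.
      fold (beta n c x).
      split; [|split; [|split; [|split; [|split]]]].
      * assert (E : 2 * x * B2 + (B1 + B2 * (x - a)) = 3/(N+2) + 3*B2*(x-a)) by (rewrite <- hi0; ring).
        rewrite E. assert (3*B2*(x-a) < 0) by nra.
        split; [lra|]. split; intro h; lra.
      * pose proof (beta_F n c a x hn hc hx0) as HF. cbv zeta in HF. fold N B0 B1 B2 in HF.
        rewrite <- hbeta in HF.
        assert (hbr := bracket_pos (N*c) a B1 B2 (x-a) hx0 hB2 hP hQ ltac:(lra)).
        assert (hF : 3*B2*(x-a)^2*((N*c + a*B1)/2 + (B1+a*B2)*(x-a)/6 + B2*(x-a)^2/12) > 0).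
        { apply Rmult_gt_0_compat; [|exact hbr]. apply Rmult_gt_0_compat; [lra|].
          replace ((x-a)^2) with ((a-x)^2) by ring. apply pow_lt. lra. }
        split; [lra|]. split; intro h; lra.
      * rewrite hbeta.
        assert (E : B0 + B1 * (x - a) + / 2 * B2 * (x - a) ^ 2 - x * (B1 + B2 * (x - a))
                    = (B0 - a*B1) + B2*(a^2-x^2)/2) by field.
        assert (B2*(a^2-x^2)/2 > 0).
        { apply Rmult_gt_0_compat; [|lra]. apply Rmult_gt_0_compat; [lra|nra]. }
        lra.
      * rewrite Rmin_right; [reflexivity|lra].
      * split; [|lra].
        rewrite hbeta.
        assert (E : B0 + B1 * (x - a) + / 2 * B2 * (x - a) ^ 2 - (x / (N - 1) + 2 * c)
          = (B0 - (a/(N-1) + 2*c)) + (B1 - 1/(N-1))*(x-a) + B2*(x-a)^2/2) by (field; lra).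
        assert ((B1 - 1/(N-1))*(x-a) > 0) by (assert (h1: B1 - 1/(N-1) < 0) by lra; assert (h2 : x - a < 0) by lra; set (q := B1 - 1/(N-1)) in *; nra).
        assert (B2*(x-a)^2/2 >= 0).
        { assert (0 <= (x-a)^2) by apply pow2_ge_0. unfold Rdiv. nra. }
        lra.
      * pose proof (beta_K n c a x hn hc hx0) as HK. cbv zeta in HK. fold N B0 B1 B2 in HK.
        rewrite <- hbeta in HK. rewrite hsa in HK.
        set (k3 := - (2 * (2 / N * a + N * c - B0) + (N - 2) ^ 2 / (N * (N - 1)) * a) * (N - 2) *
          (N - 1) * c ^ 2 * (a + 2 * (N - 1) * c) / (u0 * a) ^ 5) in HK.
        assert (hk3 : k3 < 0).
        { unfold k3. unfold Rdiv. 
          assert (h1 : 0 < (2 * (2 / N * a + N * c - B0) + (N - 2) ^ 2 / (N * (N - 1)) * a)).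
          { assert (0 < (N - 2) ^ 2 / (N * (N - 1)) * a).
            { apply Rmult_lt_0_compat; [|lra]. apply Rdiv_lt_0_compat; [apply pow_lt; lra|nra]. }
            lra. }
          assert (h2 : 0 < (N - 2) * (N - 1) * c ^ 2 * (a + 2 * (N - 1) * c) * / (u0 * a) ^ 5).
          { apply Rmult_lt_0_compat.
            - apply Rmult_lt_0_compat; [|nra]. apply Rmult_lt_0_compat; [nra|apply pow_lt; lra].
            - apply Rinv_0_lt_compat, pow_lt. nra. }
          nra. }
        assert (hB22 : 0 <= B2^2/4) by (assert (0 <= B2^2) by apply pow2_ge_0; lra).
        assert (hK : (x - a) ^ 3 * (k3 + B2 ^ 2 / 4 * (x - a)) > 0).
        { assert (h3 : (x-a)^3 < 0) by (assert (0 < (a-x)^3) by (apply pow_lt; lra); nra).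
          assert (k3 + B2 ^ 2 / 4 * (x - a) < 0) by nra. nra. }
        set (be := beta n c x) in *.
        assert (hw : 0 <= x * (be - / N * x)).
        { apply Rmult_le_pos; [lra|].
          assert (x / (N-1) + 2*c < be).
          { unfold be. rewrite hbeta.
            assert (E : B0 + B1 * (x - a) + / 2 * B2 * (x - a) ^ 2 - (x / (N - 1) + 2 * c)
              = (B0 - (a/(N-1) + 2*c)) + (B1 - 1/(N-1))*(x-a) + B2*(x-a)^2/2) by (field; lra).
            assert ((B1 - 1/(N-1))*(x-a) > 0) by (assert (h1: B1 - 1/(N-1) < 0) by lra; assert (h2 : x - a < 0) by lra; set (q := B1 - 1/(N-1)) in *; nra).
            assert (B2*(x-a)^2/2 >= 0).
            { assert (0 <= (x-a)^2) by apply pow2_ge_0. unfold Rdiv. nra. }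
            lra. }
          assert (/N * x <= x/(N-1)).
          { unfold Rdiv. rewrite Rmult_comm. apply Rmult_le_compat_l; [lra|].
            apply Rinv_le_contravar; lra. }
          lra. }
        assert (hR : 0 <= 2 / N * x + N * c - be) by lra.
        assert (Hb := sqrt_bound N (x * (be - / N * x)) (2 / N * x + N * c - be)
                  ((N - 2) ^ 2 / (N * (N - 1))) ltac:(nra) hw hR ltac:(lra) eq_refl ltac:(lra)).
        lra.
Qed.
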